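(* Let $\nu$ and $\nu'$ be $k$-atomic distributions supported on $[-1,1]$. If $|m_i(\nu)-m_i(\nu')|\le\delta$ for $i=1,\dots,2k-1$, then \[W_1(\nu,\nu')\le O\big(k\delta^{\frac{1}{2k-1}}\big).\]
   Context: A $k$-atomic distribution is a discrete distribution supported on (at most) $k$ points. $m_i(\pi)=\mathbb{E}_\pi X^i$. $W_1$ is the 1-Wasserstein distance: $W_1(\nu,\nu')=\inf\mathbb{E}|X-Y|$ over couplings of $\nu,\nu'$. $O(\cdot)$ hides an absolute constant. *)

(* Defs.v *)
From HB Require Import structures.
From mathcomp Require Import all_boot all_order all_algebra.
From mathcomp Require Import all_classical all_reals all_analysis.
From mathcomp Require Import Rstruct Rstruct_topology.
From Stdlib Require Import Rdefinitions.
Set Implicit Arguments. Unset Strict Implicit. Unset Printing Implicit Defensive.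
Import Order.TTheory GRing.Theory Num.Theory.
Local Open Scope ring_scope.
Local Open Scope classical_set_scope.

(* A k-atomic distribution is given by weights w and atoms x indexed by 'I_k
   (zero weights / repeated atoms allowed, so "at most k" points). *)
Definition katomic_on11 (k : nat) (w x : 'I_k -> R) : Prop :=
  (forall i, 0 <= w i) /\ \sum_(i < k) w i = 1 /\ (forall i, -1 <= x i <= 1).

Definition moment (k : nat) (w x : 'I_k -> R) (n : nat) : R :=
  \sum_(j < k) w j * x j ^+ n.

(* couplings of sum_i w i delta_{x i} and sum_j w' j delta_{x' j}: any coupling
   is supported on supp x supp', hence given by a nonnegative matrix with the
   prescribed marginals. *)
Definition coupling (k : nat) (w w' : 'I_k -> R) (g : 'I_k -> 'I_k -> R) : Prop :=
  (forall i j, 0 <= g i j) /\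
  (forall i, \sum_(j < k) g i j = w i) /\
  (forall j, \sum_(i < k) g i j = w' j).

Definition coupling_cost (k : nat) (x x' : 'I_k -> R) (g : 'I_k -> 'I_k -> R) : R :=
  \sum_(i < k) \sum_(j < k) g i j * `|x i - x' j|.

Definition W1 (k : nat) (w x w' x' : 'I_k -> R) : R :=
  inf [set c | exists g, coupling w w' g /\ c = coupling_cost x x' g].

(* Main.v *)
Require Import Defs.
From HB Require Import structures.
From mathcomp Require Import all_boot all_order all_algebra.
From mathcomp Require Import all_classical all_reals all_analysis.
From mathcomp Require Import Rstruct Rstruct_topology.
From Stdlib Require Import Rdefinitions.
From mathcomp Require Import ring lra zify.
Import Order.TTheory GRing.Theory Num.Theory.
Local Open Scope ring_scope.
Lemma kill_moments (I : finType) (z r : I -> R) (n : nat) (D : R) (U : seq R) :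
  (forall u, u \in U -> -1 <= u <= 1) ->
  (forall j : nat, (j < n)%nat -> `|\sum_i r i * z i ^+ j| <= D) ->
  forall j : nat, (j + size U < n)%nat ->
  `|\sum_i r i * \prod_(u <- U) (z i - u) * z i ^+ j| <= 2 ^+ size U * D.
Proof.
elim: U => [|u U IH] hU hm j hj.
  rewrite expr0 mul1r; under eq_bigr do rewrite big_nil mulr1.
  by apply: hm; rewrite addn0 in hj.
have hU' : forall v, v \in U -> -1 <= v <= 1.
  by move=> v hv; apply: hU; rewrite inE hv orbT.
have /andP [hu1 hu2] : -1 <= u <= 1 by apply: hU; rewrite inE eqxx.
have -> : \sum_i r i * \prod_(v <- u :: U) (z i - v) * z i ^+ j =
   \sum_i r i * \prod_(v <- U) (z i - v) * z i ^+ j.+1 -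
   u * \sum_i r i * \prod_(v <- U) (z i - v) * z i ^+ j.
  rewrite mulr_sumr -sumrB; apply: eq_bigr => i _.
  rewrite big_cons exprS; ring.
have h1 := IH hU' hm j.+1; have h2 := IH hU' hm j.
rewrite /= addnS in hj.
have h1' := h1; move: h1' => _.
have {}h1 : `|\sum_i r i * \prod_(v <- U) (z i - v) * z i ^+ j.+1| <= 2 ^+ size U * D.
  by apply: h1; rewrite addSn.
have {}h2 : `|\sum_i r i * \prod_(v <- U) (z i - v) * z i ^+ j| <= 2 ^+ size U * D.
  by apply: h2; apply: ltnW.
have h1' := h1.
set a := \sum_i _ in h1' *; set b := \sum_i _ in h2 *.
have hub : `|u| <= 1 by rewrite ler_norml hu1 hu2.
have hD : 0 <= 2 ^+ size U * D by apply: le_trans h2.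
rewrite /= exprS.
apply: (le_trans (ler_normB _ _)); rewrite normrM.
have : `|u| * `|b| <= 2 ^+ size U * D.
  apply: (le_trans (y := 1 * `|b|)); last by rewrite mul1r.
  by apply: ler_wpM2r.
lra.
Qed.
Lemma Sbound (I : finType) (z : I -> R) (G : R) : 0 < G -> G <= 2 ->
  forall (vs : seq R) (rho : I -> R) (D : R) (U : seq R),
  0 <= D ->
  (forall v, v \in vs -> -1 <= v <= 1) ->
  (forall i, rho i != 0 -> z i \in vs) ->
  (forall j : nat, (j < size vs)%nat -> `|\sum_i rho i * z i ^+ j| <= D) ->
  (forall u v, u \in U -> v \in vs -> G <= v - u) ->
  `|\sum_i rho i * \prod_(u <- U) (z i - u)^-1| * G ^+ (size U + size vs).-1
     <= 3 ^+ (size U + size vs) * D.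
Proof.
move=> G0 G2; elim=> [|v vs IHv] rho D U D0 hvs hsupp hmom hpole.
  have h0 : forall i, rho i = 0.
    by move=> i; apply/eqP; apply/negPn/negP => /hsupp.
  under eq_bigr do rewrite h0 mul0r.
  by rewrite big1 // normr0 mul0r mulr_ge0 // exprn_ge0.
have hpoleU := hpole; move: hpoleU => _.
elim: U hpole => [|u U IHu] hpole.
  under eq_bigr do rewrite big_nil mulr1.
  rewrite add0n /=.
  have h1 := hmom 0%nat isT.
  have e : \sum_i rho i * z i ^+ 0 = \sum_i rho i by apply: eq_bigr => i _; rewrite expr0 mulr1.
  rewrite e in h1.
  have hG : G ^+ size vs <= 3 ^+ (size vs).+1.
    apply: (le_trans (y := 3 ^+ size vs)).
      by apply: lerXn2r => //; rewrite ?nnegrE; lra.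
    by apply: ler_weXn2l => //; lra.
  apply: (le_trans (y := D * G ^+ size vs)).
    by apply: ler_wpM2r => //; rewrite exprn_ge0 //; lra.
  by rewrite mulrC; apply: ler_wpM2r.
set rho' := fun i => rho i * (z i - v).
have hvs' : forall w, w \in vs -> -1 <= w <= 1.
  by move=> w hw; apply: hvs; rewrite inE hw orbT.
have /andP [hv1 hv2] : -1 <= v <= 1 by apply: hvs; rewrite inE eqxx.
have hsupp' : forall i, rho' i != 0 -> z i \in vs.
  move=> i; rewrite /rho' mulf_eq0 negb_or => /andP [hr hz].
  move: (hsupp i hr); rewrite inE => /orP [/eqP e|//].
  by move: hz; rewrite e subrr eqxx.
have hmom' : forall j : nat, (j < size vs)%nat ->
    `|\sum_i rho' i * z i ^+ j| <= 2 * D.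
  move=> j hj.
  have -> : \sum_i rho' i * z i ^+ j =
      \sum_i rho i * z i ^+ j.+1 - v * \sum_i rho i * z i ^+ j.
    rewrite mulr_sumr -sumrB; apply: eq_bigr => i _.
    rewrite /rho' exprS; ring.
  have h1 := hmom j.+1 hj.
  have h2 := hmom j (ltnW hj).
  apply: (le_trans (ler_normB _ _)); rewrite normrM.
  have hvb : `|v| <= 1 by rewrite ler_norml hv1 hv2.
  have : `|v| * `|\sum_i rho i * z i ^+ j| <= D.
    apply: (le_trans (y := 1 * `|\sum_i rho i * z i ^+ j|)); last by rewrite mul1r.
    by apply: ler_wpM2r.
  lra.
have hpole' : forall u0 w, u0 \in u :: U -> w \in vs -> G <= w - u0.
  by move=> u0 w hu hw; apply: hpole => //; rewrite inE hw orbT.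
have IH2 := IHv rho' (2 * D) (u :: U) (mulr_ge0 (ler0n _ 2) D0) hvs' hsupp' hmom' hpole'.
have IH1 : `|\sum_i rho i * \prod_(u0 <- U) (z i - u0)^-1| *
     G ^+ (size U + size (v :: vs)).-1 <= 3 ^+ (size U + size (v :: vs)) * D.
  by apply: IHu => u0 w hu hw; apply: hpole => //; rewrite inE hu orbT.
have hvu : G <= v - u by apply: hpole; rewrite inE eqxx.
have hid : \sum_i rho i * \prod_(u0 <- u :: U) (z i - u0)^-1 =
    (v - u)^-1 * (\sum_i rho i * \prod_(u0 <- U) (z i - u0)^-1 -
                  \sum_i rho' i * \prod_(u0 <- u :: U) (z i - u0)^-1).
  rewrite -sumrB mulr_sumr; apply: eq_bigr => i _.
  rewrite !big_cons /rho'.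
  have [->|hr] := eqVneq (rho i) 0; first by rewrite !mul0r subrr mulr0.
  have hzi : G <= z i - u.
    have := hsupp i hr; rewrite inE => /orP [/eqP ->|hw]; first by [].
    by apply: hpole; rewrite ?inE ?eqxx ?hw ?orbT.
  have hz0 : z i - u != 0 by apply/eqP => e; rewrite e in hzi; lra.
  have hvu0 : v - u != 0 by apply/eqP => e; rewrite e in hvu; lra.
  by field; rewrite hz0 hvu0.
rewrite hid.
move: IH1 IH2; rewrite /= !addSn !addnS /=.
set a := size U; set b := size vs.
set S1 := \sum_i rho i * _; set S2 := \sum_i rho' i * _.
move=> IH1 IH2.
rewrite normrM exprS.
have hinv : `|(v - u)^-1| * G <= 1.
  rewrite ger0_norm ?invr_ge0; last by lra.
  rewrite mulrC ler_pdivrMr; last by lra.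
  by rewrite mul1r.
have hGa : 0 <= G ^+ (a + b) by rewrite exprn_ge0 //; lra.
have e3 : 3 ^+ (a + b).+2 = 3 * 3 ^+ (a + b).+1 :> R by rewrite exprS.
rewrite e3.
have hS : `|S1 - S2| * G ^+ (a + b) <= 3 * 3 ^+ (a + b).+1 * D.
  apply: (le_trans (y := (`|S1| + `|S2|) * G ^+ (a + b))).
    by apply: ler_wpM2r => //; apply: ler_normB.
  rewrite mulrDl; lra.
have hn : 0 <= `|S1 - S2| * G ^+ (a + b) by rewrite mulr_ge0.
have e : `|(v - u)^-1| * `|S1 - S2| * (G * G ^+ (a + b)) =
   (`|(v - u)^-1| * G) * (`|S1 - S2| * G ^+ (a + b)) by ring.
rewrite e; apply: (le_trans _ hS).
rewrite -[X in _ <= X]mul1r.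
by apply: ler_wpM2r.
Qed.
Lemma gap_bound (I : finType) (z r : I -> R) (delta A G : R) :
  0 < G -> G <= 2 -> 0 <= delta ->
  (forall i, -1 <= z i <= 1) ->
  (forall i, z i <= A \/ A + G <= z i) ->
  (forall j : nat, (j < #|I|)%nat -> `|\sum_i r i * z i ^+ j| <= delta) ->
  `|\sum_(i | A < z i) r i| * G ^+ #|I|.-1 <= 6 ^+ #|I| * delta.
Proof.
move=> G0 G2 d0 hz hsep hmom.
set U := [seq z i | i <- enum I & z i <= A].
set V := [seq z i | i <- enum I & A < z i].
have hsz : (size U + size V = #|I|)%nat.
  rewrite !size_map !size_filter cardT -(count_predC (fun i => z i <= A)).
  congr (_ + _)%nat; apply: eq_count => i /=; by rewrite ltNge.
have hU : forall u, u \in U -> u <= A.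
  by move=> u /mapP [j]; rewrite mem_filter => /andP [hj _] ->.
have hV : forall v, v \in V -> A + G <= v.
  move=> v /mapP [j]; rewrite mem_filter => /andP [hj _] ->.
  by case: (hsep j) => // h; move: hj; rewrite ltNge h.
set rho := fun i => r i * \prod_(u <- U) (z i - u).
have hrho0 : forall i, z i <= A -> rho i = 0.
  move=> i hi; have hiU : z i \in U by apply: map_f; rewrite mem_filter mem_enum andbT.
  by rewrite /rho (big_rem (z i)) //= subrr mul0r mulr0.
have key : \sum_(i | A < z i) r i = \sum_i rho i * \prod_(u <- U) (z i - u)^-1.
  rewrite big_mkcond; apply: eq_bigr => i _; case: ifP => h.
    rewrite /rho -mulrA -big_split /= big_seq big1 ?mulr1 // => u hu.
    have := hU u hu => hu'; rewrite mulfV //; apply/eqP => e; lra.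
  by rewrite hrho0 ?mul0r // leNgt h.
have hS := @Sbound I z G G0 G2 V rho (2 ^+ size U * delta) U.
rewrite key; move: hS; rewrite hsz => hS.
apply: (le_trans (hS _ _ _ _ _)).
- by rewrite mulr_ge0 // exprn_ge0.
- by move=> v /mapP [j _ ->]; apply: hz.
- move=> i; have [hi|hi] := lerP (z i) A; first by rewrite hrho0 ?eqxx.
  by move=> _; apply: map_f; rewrite mem_filter mem_enum andbT.
- move=> j hj; rewrite /rho.
  apply: (@kill_moments I z r #|I| delta U) => //.
  + by move=> u /mapP [i _ ->]; apply: hz.
  + by rewrite -hsz addnC ltn_add2l.
- move=> u v hu hv; have := hU u hu; have := hV v hv; lra.
- apply: (le_trans (y := 3 ^+ #|I| * (2 ^+ #|I| * delta))).
    rewrite ler_wpM2l ?exprn_ge0 // ler_wpM2r // ler_weXn2l //; first by lra.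
    by rewrite -hsz leq_addr.
  rewrite mulrA -exprMn.
  by rewrite -natrM; exact: lexx.
Qed.
Definition cl (a b t : R) := if t <= a then a else if b <= t then b else t.

Lemma cl_mono a b t1 t2 : a <= b -> t1 <= t2 -> cl a b t1 <= cl a b t2.
Proof.
move=> hab ht; rewrite /cl.
case: (lerP t1 a) => h1; case: (lerP b t1) => h2; case: (lerP t2 a) => h3;
  case: (lerP b t2) => h4; lra.
Qed.

Lemma cl_sym a b c d : a <= b -> c <= d -> cl a b d - cl a b c = cl c d b - cl c d a.
Proof.
move=> hab hcd; rewrite /cl.
case: (lerP d a) => h1; case: (lerP b d) => h2; case: (lerP c a) => h3;
  case: (lerP b c) => h4; case: (lerP d b) => h6;
  case: (lerP a c) => h7; lra.
Qed.

Lemma cl_lo a b t : t <= a -> cl a b t = a.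
Proof. by move=> h; rewrite /cl h. Qed.

Lemma cl_hi a b t : a <= b -> b <= t -> cl a b t = b.
Proof.
move=> hab h; rewrite /cl; case: (lerP t a) => h1 //; last by rewrite h.
lra.
Qed.

Definition cum (f : nat -> R) (l : nat) := \sum_(i < l) f i.

Lemma cumS f l : cum f l.+1 = cum f l + f l.
Proof. by rewrite /cum big_ord_recr. Qed.

Lemma cum0 f : cum f 0 = 0.
Proof. by rewrite /cum big_ord0. Qed.

Lemma cum_mono (n : nat) (f : nat -> R) :
  (forall i : nat, (i < n)%nat -> 0 <= f i) ->
  forall i j : nat, (i <= j)%nat -> (j <= n)%nat -> cum f i <= cum f j.
Proof.
move=> hf i; elim=> [|j IH] hij hjn.
  by move: hij; rewrite leqn0 => /eqP ->.
move: hij; rewrite leq_eqVlt => /orP [/eqP ->|hij]; first by [].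
rewrite cumS; have := IH hij (ltnW hjn); have := hf j hjn; lra.
Qed.

Lemma sum_tele (n : nat) (F : nat -> R) :
  \sum_(j < n) (F j.+1 - F j) = F n - F 0%nat.
Proof. by rewrite -(big_mkord xpredT (fun j => F j.+1 - F j)) telescope_sumr. Qed.

Lemma sum_ind_gt (n l : nat) (X : nat -> R) : (l < n)%nat ->
  \sum_(j < n) (l < j)%:R * X j = \sum_(l.+1 <= j < n) X j.
Proof.
move=> hl.
rewrite -(big_mkord xpredT (fun j => (l < j)%:R * X j)).
rewrite (big_cat_nat (n := l.+1)) //=.
rewrite big1_seq ?add0r; last first.
  move=> j /andP [_]; rewrite mem_index_iota => /andP [_ hj].
  by rewrite ltnNge -ltnS hj /= mul0r.
apply: eq_big_nat => j /andP [hj _]; by rewrite hj mul1r.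
Qed.

Lemma sum_ind_le (n l : nat) (X : nat -> R) : (l < n)%nat ->
  \sum_(j < n) (j <= l)%:R * X j = \sum_(0 <= j < l.+1) X j.
Proof.
move=> hl.
rewrite -(big_mkord xpredT (fun j => (j <= l)%:R * X j)).
rewrite (big_cat_nat (n := l.+1)) //=.
rewrite [X in _ + X]big1_seq ?addr0; last first.
  move=> j /andP [_]; rewrite mem_index_iota => /andP [hj _].
  by rewrite leqNgt hj /= mul0r.
apply: eq_big_nat => j /andP [_ hj]; by rewrite -ltnS hj mul1r.
Qed.

Lemma sum_nat_tele (m n : nat) (F : nat -> R) : (m <= n)%nat ->
  \sum_(m <= j < n) (F j.+1 - F j) = F n - F m.
Proof. by move=> h; rewrite telescope_sumr. Qed.
Lemma half_cross (n l : nat) (A B : nat -> R) :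
  (l < n)%nat ->
  (forall i j : nat, (i <= j)%nat -> (j <= n)%nat -> A i <= A j) ->
  (forall i j : nat, (i <= j)%nat -> (j <= n)%nat -> B i <= B j) ->
  A 0%nat = 0 -> B 0%nat = 0 -> A n = 1 -> B n = 1 ->
  \sum_(i < n) \sum_(j < n) (i <= l)%:R * ((l < j)%:R *
      (cl (A i) (A i.+1) (B j.+1) - cl (A i) (A i.+1) (B j)))
  = cl (B l.+1) (GRing.one _) (A l.+1) - B l.+1.
Proof.
move=> hl hA hB A0 B0 An Bn.
under eq_bigr => i _ do rewrite -mulr_sumr (@sum_ind_gt n l (fun j => cl (A i) (A i.+1) (B j.+1) - cl (A i) (A i.+1) (B j)) hl) sum_nat_tele //.
rewrite (@sum_ind_le n l (fun i => cl (A i) (A i.+1) (B n) - cl (A i) (A i.+1) (B l.+1)) hl).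
have hc1 : B l.+1 <= 1 by rewrite -Bn; apply: hB.
have hc0 : 0 <= B l.+1 by rewrite -B0; apply: hB.
rewrite (eq_big_nat _ _ (F2 := fun i => cl (B l.+1) (GRing.one _) (A i.+1) - cl (B l.+1) (GRing.one _) (A i))); last first.
  move=> i /andP [_ hi]; rewrite Bn cl_sym //; apply: hA => //.
  by apply: leq_trans hl.
by rewrite sum_nat_tele // A0 (cl_lo (B l.+1) (GRing.one _) 0 hc0).
Qed.

Lemma layer (n : nat) (z : nat -> R) :
  (forall a b : nat, (a <= b)%nat -> (b < n)%nat -> z a <= z b) ->
  forall i j : nat, (i < n)%nat -> (j < n)%nat ->
  `|z i - z j| = \sum_(l < n) (z l.+1 - z l) *
      ((i <= l)%:R * (l < j)%:R + (j <= l)%:R * (l < i)%:R).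
Proof.
move=> hz.
have hpre : forall t : nat, (t <= n)%nat ->
    \sum_(l < n) (z l.+1 - z l) * (l < t)%:R = z t - z 0%nat.
  move=> t ht.
  rewrite -(big_mkord xpredT (fun l => (z l.+1 - z l) * (l < t)%:R)).
  rewrite (big_cat_nat (n := t)) //=.
  rewrite [X in _ + X]big1_seq ?addr0; last first.
    move=> l /andP [_]; rewrite mem_index_iota => /andP [hl _].
    by rewrite ltnNge hl /= mulr0.
  rewrite (eq_big_nat _ _ (F2 := fun l => z l.+1 - z l)); last first.
    by move=> l /andP [_ hl]; rewrite hl mulr1.
  by rewrite sum_nat_tele.
have main : forall i j : nat, (i <= j)%nat -> (j < n)%nat ->
  `|z i - z j| = \sum_(l < n) (z l.+1 - z l) *
      ((i <= l)%:R * (l < j)%:R + (j <= l)%:R * (l < i)%:R).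
  move=> i j hij hj.
  rewrite (eq_bigr (fun l : 'I_n => (z l.+1 - z l) * (l < j)%:R - (z l.+1 - z l) * (l < i)%:R)); last first.
    move=> l _; rewrite -mulrBr; congr (_ * _).
    case: (ltnP l i) => h1.
      have h2 : (l < j)%nat by apply: leq_trans h1 hij.
      rewrite h2 (leqNgt j l) h2 /= ?mulr1n ?mulr0n; ring.
    case: (ltnP l j) => h2; rewrite /= ?mulr1n ?mulr0n; first by ring.
    by ring.
  rewrite sumrB !hpre ?(ltnW hj) ?(leq_trans hij (ltnW hj)) //.
  rewrite distrC ger0_norm; last by rewrite subr_ge0; apply: hz.
  lra.
move=> i j hi hj.
case: (leqP i j) => h; first by apply: main.
rewrite distrC (main j i (ltnW h) hi).
by apply: eq_bigr => l _; rewrite [X in _ * X]addrC.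
Qed.
Lemma abs_split (X c : R) : 0 <= X <= 1 -> 0 <= c <= 1 ->
  `|X - c| = (cl c (GRing.one _) X - c) + (cl X (GRing.one _) c - X).
Proof.
move=> /andP [h1 h2] /andP [h3 h4]; rewrite /cl.
case: (lerP X c) => h5.
  case: (lerP c X) => h7; case: (lerP 1 c) => h8; lra.
case: (lerP 1 X) => h6; case: (lerP c X) => h7; try case: (lerP 1 c) => h8; lra.
Qed.

Lemma nat_coupling (n : nat) (z p q : nat -> R) :
  (forall a b : nat, (a <= b)%nat -> (b < n)%nat -> z a <= z b) ->
  (forall i : nat, (i < n)%nat -> 0 <= p i) ->
  (forall i : nat, (i < n)%nat -> 0 <= q i) ->
  cum p n = 1 -> cum q n = 1 ->
  exists g : nat -> nat -> R,
   (forall i j : nat, (i < n)%nat -> (j < n)%nat -> 0 <= g i j) /\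
   (forall i : nat, (i < n)%nat -> \sum_(j < n) g i j = p i) /\
   (forall j : nat, (j < n)%nat -> \sum_(i < n) g i j = q j) /\
   \sum_(i < n) \sum_(j < n) g i j * `|z i - z j|
     = \sum_(l < n) (z l.+1 - z l) * `|cum p l.+1 - cum q l.+1|.
Proof.
move=> hz hp hq hP1 hQ1.
have hP := @cum_mono n p hp; have hQ := @cum_mono n q hq.
set A := cum p in hP hP1 *; set B := cum q in hQ hQ1 *.
have A0 : A 0%nat = 0 by rewrite /A cum0.
have B0 : B 0%nat = 0 by rewrite /B cum0.
have hAi : forall i : nat, (i <= n)%nat -> 0 <= A i <= 1.
  by move=> i hi; rewrite -A0 -hP1 !hP.
have hBi : forall i : nat, (i <= n)%nat -> 0 <= B i <= 1.
  by move=> i hi; rewrite -B0 -hQ1 !hQ.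
pose g := fun i j : nat => cl (A i) (A i.+1) (B j.+1) - cl (A i) (A i.+1) (B j).
have gsym : forall i j : nat, (i < n)%nat -> (j < n)%nat ->
   g i j = cl (B j) (B j.+1) (A i.+1) - cl (B j) (B j.+1) (A i).
  by move=> i j hi hj; rewrite /g cl_sym // ?hP ?hQ.
exists g; split; [|split; [|split]].
- move=> i j hi hj; rewrite subr_ge0; apply: cl_mono; first by apply: hP.
  by apply: hQ.
- move=> i hi; rewrite /g (sum_tele n (fun t => cl (A i) (A i.+1) (B t))).
  rewrite hQ1 B0 cl_hi ?cl_lo ?hP //.
  - by rewrite /A cumS; ring.
  - by case/andP: (hAi i (ltnW hi)).
  - by case/andP: (hAi i.+1 hi).
- move=> j hj.
  rewrite (eq_bigr (fun i : 'I_n => cl (B j) (B j.+1) (A i.+1) - cl (B j) (B j.+1) (A i))); last first.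
    by move=> i _; rewrite gsym.
  rewrite (sum_tele n (fun t => cl (B j) (B j.+1) (A t))).
  rewrite hP1 A0 cl_hi ?cl_lo ?hQ //.
  - by rewrite /B cumS; ring.
  - by case/andP: (hBi j (ltnW hj)).
  - by case/andP: (hBi j.+1 hj).
have e1 : \sum_(i < n) \sum_(j < n) g i j * `|z i - z j| =
   \sum_(l < n) (z l.+1 - z l) * (\sum_(i < n) \sum_(j < n)
       ((i <= l)%:R * ((l < j)%:R * g i j)) +
       \sum_(j < n) \sum_(i < n) ((j <= l)%:R * ((l < i)%:R * g i j))).
  rewrite (eq_bigr (fun i : 'I_n => \sum_(j < n) \sum_(l < n) (z l.+1 - z l) *
      ((i <= l)%:R * ((l < j)%:R * g i j) + (j <= l)%:R * ((l < i)%:R * g i j)))); last first.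
    move=> i _; apply: eq_bigr => j _.
    rewrite (@layer n z hz i j (ltn_ord i) (ltn_ord j)) mulr_sumr.
    by apply: eq_bigr => l _; ring.
  rewrite (eq_bigr (fun i : 'I_n => \sum_(l < n) \sum_(j < n) (z l.+1 - z l) *
      ((i <= l)%:R * ((l < j)%:R * g i j) + (j <= l)%:R * ((l < i)%:R * g i j)))); last first.
    by move=> i _; rewrite exchange_big.
  rewrite exchange_big; apply: eq_bigr => l _.
  rewrite [X in _ * (_ + X)]exchange_big -big_split /= mulr_sumr.
  apply: eq_bigr => i _; rewrite -big_split mulr_sumr.
  by apply: eq_bigr => j _.
rewrite e1; apply: eq_bigr => l _; congr (_ * _).
have hl := ltn_ord l.
rewrite (@half_cross n l A B hl hP hQ A0 B0 hP1 hQ1).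
rewrite (eq_bigr (fun j : 'I_n => \sum_(i < n) (j <= l)%:R * ((l < i)%:R *
    (cl (B j) (B j.+1) (A i.+1) - cl (B j) (B j.+1) (A i))))); last first.
  by move=> j _; apply: eq_bigr => i _; rewrite gsym.
rewrite (@half_cross n l B A hl hQ hP B0 A0 hQ1 hP1).
by rewrite abs_split ?hAi ?hBi.
Qed.
Lemma bridge (I : finType) (s : seq I) (c0 : I) (F : I -> R) (n : nat) :
  perm_eq s (enum I) -> size s = n ->
  \sum_(l < n) F (nth c0 s l) = \sum_i F i.
Proof.
move=> hs hn; rewrite -hn.
rewrite -(big_mkord xpredT (fun l => F (nth c0 s l))) -(big_nth c0 xpredT F).
by rewrite (perm_big _ hs) big_enum.
Qed.

Lemma bridge2 (I : finType) (s : seq I) (c0 : I) (F : nat -> R) (n : nat) :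
  perm_eq s (enum I) -> size s = n ->
  \sum_(d : I) F (index d s) = \sum_(l < n) F l.
Proof.
move=> hs hn; rewrite -(@bridge I s c0 (fun d => F (index d s)) n hs hn).
have hu : uniq s by rewrite (perm_uniq hs) enum_uniq.
by apply: eq_bigr => l _; rewrite index_uniq // hn.
Qed.

Lemma gap_arith (m : nat) (G X delta t : R) : (2 <= m)%nat ->
  0 <= G -> 0 <= X <= 1 -> 0 <= t -> t ^+ m.-1 = delta ->
  X * G ^+ m.-1 <= 6 ^+ m * delta -> G * X <= 36 * t.
Proof.
move=> hm G0 /andP [X0 X1] t0 ht hb.
have h6 : 6 ^+ m <= 36 ^+ m.-1 :> R.
  have -> : 36 = 6 ^+ 2 :> R by rewrite -natrX.
  rewrite -exprM; apply: ler_weXn2l; first by lra.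
  lia.
case: m hm ht hb h6 => [|[|m]] // _ ht hb h6 /=.
rewrite /= in ht hb h6.
rewrite leNgt; apply/negP => hlt.
have hG : 36 * t < G.
  apply: (lt_le_trans hlt); rewrite -[X in _ <= X]mulr1; apply: ler_wpM2l => //.
have Gp : 0 < G by apply: le_lt_trans hG; rewrite mulr_ge0 //; lra.
have hGm : (36 * t) ^+ m <= G ^+ m.
  apply: lerXn2r; rewrite ?nnegrE.
  - by rewrite mulr_ge0 //; lra.
  - by apply: ltW.
  - by apply: ltW.
have : (36 * t) * (36 * t) ^+ m < (G * X) * G ^+ m.
  apply: (le_lt_trans (y := (36 * t) * G ^+ m)).
    by apply: ler_wpM2l => //; rewrite mulr_ge0 //; lra.
  by rewrite ltr_pM2r ?exprn_gt0.
have e1 : (G * X) * G ^+ m = X * G ^+ m.+1 by rewrite exprS; ring.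
have e2 : (36 * t) * (36 * t) ^+ m = 36 ^+ m.+1 * delta.
  by rewrite -exprS exprMn ht.
rewrite e1 e2 => h.
have d0 : 0 <= delta by rewrite -ht exprn_ge0.
have h3 : 6 ^+ m.+2 * delta <= 36 ^+ m.+1 * delta by apply: ler_wpM2r.
have := lt_le_trans h (le_trans hb h3).
by rewrite ltxx.
Qed.
Lemma absdiff01 (a b : R) : 0 <= a <= 1 -> 0 <= b <= 1 -> 0 <= `|a - b| <= 1.
Proof.
move=> /andP [? ?] /andP [? ?]; rewrite normr_ge0 /= ler_norml; apply/andP; split; lra.
Qed.

Lemma gap2 (a b : R) : -1 <= a <= 1 -> -1 <= b <= 1 -> b - a <= 2.
Proof. move=> /andP [? ?] /andP [? ?]; lra. Qed.

Theorem proposition1 :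
  exists C : R, 0 < C /\
  forall (k : nat) (w x w' x' : 'I_k -> R) (delta : R),
    (0 < k)%nat ->
    katomic_on11 w x -> katomic_on11 w' x' ->
    (forall i : nat, (1 <= i <= 2 * k - 1)%nat ->
       `|moment w x i - moment w' x' i| <= delta) ->
    W1 w x w' x' <= C * k%:R * powR delta (2 * k - 1)%nat%:R^-1.
Proof.
exists 72; split; first by lra.
move=> k w x w' x' delta hk [hw [hw1 hx]] [hw' [hw1' hx']] hmom.
pose u : 'I_(k + k) -> R := fun c => match fintype.split c with inl a => x a | inr b => x' b end.
pose pm : 'I_(k + k) -> R := fun c => match fintype.split c with inl a => w a | inr _ => 0 end.
pose qm : 'I_(k + k) -> R := fun c => match fintype.split c with inl _ => 0 | inr b => w' b end.
have sL : forall a : 'I_k, fintype.split (lshift k a) = inl a := fun a => unsplitK (inl a).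
have sR : forall b : 'I_k, fintype.split (rshift k b) = inr b := fun b => unsplitK (inr b).
have uL : forall a, u (lshift k a) = x a by move=> a; rewrite /u sL.
have uR : forall b, u (rshift k b) = x' b by move=> b; rewrite /u sR.
have pL : forall a, pm (lshift k a) = w a by move=> a; rewrite /pm sL.
have pR : forall b, pm (rshift k b) = 0 by move=> b; rewrite /pm sR.
have qL : forall a, qm (lshift k a) = 0 by move=> a; rewrite /qm sL.
have qR : forall b, qm (rshift k b) = w' b by move=> b; rewrite /qm sR.
have u_rng : forall c, -1 <= u c <= 1 by move=> c; rewrite /u; case: (fintype.split c).
have pm0 : forall c, 0 <= pm c by move=> c; rewrite /pm; case: (fintype.split c).
have qm0 : forall c, 0 <= qm c by move=> c; rewrite /qm; case: (fintype.split c).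
pose leT := fun c d : 'I_(k + k) => u c <= u d.
pose s := sort leT (enum 'I_(k + k)).
have hs : perm_eq s (enum 'I_(k + k)) by rewrite /s perm_sort perm_refl.
have hsz : size s = (k + k)%nat by rewrite /s size_sort size_enum_ord.
have hmem : forall c, c \in s by move=> c; rewrite (perm_mem hs) mem_enum.
have hidx : forall c, (index c s < k + k)%nat by move=> c; have := index_mem c s; rewrite hmem hsz.
pose c0 : 'I_(k + k) := lshift k (Ordinal hk).
pose z := fun l : nat => u (nth c0 s l).
pose p := fun l : nat => pm (nth c0 s l).
pose q := fun l : nat => qm (nth c0 s l).
have hsorted : sorted leT s.
  by apply: sort_sorted => c d; rewrite /leT; apply: le_total.
have hz : forall a b : nat, (a <= b)%nat -> (b < k + k)%nat -> z a <= z b.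
  move=> a b hab hb.
  apply: (sorted_leq_nth (leT := leT) _ _ c0 hsorted) => //.
  - by move=> c d e; rewrite /leT; apply: le_trans.
  - by move=> c; rewrite /leT.
  - by rewrite inE hsz (leq_ltn_trans hab hb).
  - by rewrite inE hsz.
have hzr : forall l, -1 <= z l <= 1 by move=> l; apply: u_rng.
have hp : forall i : nat, (i < k + k)%nat -> 0 <= p i by move=> i _; apply: pm0.
have hq : forall i : nat, (i < k + k)%nat -> 0 <= q i by move=> i _; apply: qm0.
have hP1 : cum p (k + k) = 1.
  rewrite /cum /p (@bridge _ s c0 pm _ hs hsz) big_split_ord /=.
  under eq_bigr do rewrite pL. under [X in _ + X]eq_bigr do rewrite pR.
  by rewrite hw1 big1 // addr0.
have hQ1 : cum q (k + k) = 1.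
  rewrite /cum /q (@bridge _ s c0 qm _ hs hsz) big_split_ord /=.
  under eq_bigr do rewrite qL. under [X in _ + X]eq_bigr do rewrite qR.
  by rewrite hw1' big1 // add0r.
have hmomz : forall j : nat, (j < k + k)%nat ->
    `|\sum_(i < k + k) (p i - q i) * z i ^+ j| <= delta.
  move=> j hj.
  have -> : \sum_(i < k + k) (p i - q i) * z i ^+ j = moment w x j - moment w' x' j.
    rewrite /p /q /z (@bridge _ s c0 (fun c => (pm c - qm c) * u c ^+ j) _ hs hsz).
    rewrite big_split_ord /= /moment.
    under eq_bigr do rewrite pL qL uL subr0.
    under [X in _ + X]eq_bigr do rewrite pR qR uR sub0r mulNr.
    by rewrite sumrN.
  case: j hj => [|j] hj; last by apply: hmom; apply/andP; split => //; lia.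
  have d0 : 0 <= delta by apply: le_trans (hmom 1%nat _) => //; apply/andP; split => //; lia.
  rewrite /moment.
  under eq_bigr do rewrite expr0 mulr1.
  under [X in _ - X]eq_bigr do rewrite expr0 mulr1.
  by rewrite hw1 hw1' subrr normr0.
have [g [hg1 [hg2 [hg3 hg4]]]] := @nat_coupling (k + k) z p q hz hp hq hP1 hQ1.
have nthi : forall c, nth c0 s (index c s) = c by move=> c; apply: nth_index.
pose gg := fun a b : 'I_k => g (index (lshift k a) s) (index (rshift k b) s).
have hcoup : coupling w w' gg.
  split; [|split].
  - by move=> a b; apply: hg1; apply: hidx.
  - move=> a; set ia := index (lshift k a) s.
    have := hg2 ia (hidx _); rewrite /p /ia nthi pL => <-.
    rewrite -(@bridge2 _ s c0 (fun l => g ia l) _ hs hsz) big_split_ord /=.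
    rewrite [X in _ = X + _]big1 ?add0r // => a' _.
    set j' := index (lshift k a') s.
    have hcol := hg3 j' (hidx _); rewrite /q /j' nthi qL in hcol.
    have hcol' : \sum_(i < k + k) g i j' = 0 := hcol.
    have h0 : forall i : 'I_(k + k), true -> 0 <= g i j'.
      by move=> i _; apply: hg1 => //; apply: hidx.
    exact: (@psumr_eq0P _ _ xpredT (fun i : 'I_(k + k) => g i j') h0 hcol' (Ordinal (hidx (lshift k a))) isT).
  - move=> b; set jb := index (rshift k b) s.
    have := hg3 jb (hidx _); rewrite /q /jb nthi qR => <-.
    rewrite -(@bridge2 _ s c0 (fun l => g l jb) _ hs hsz) big_split_ord /=.
    rewrite [X in _ = _ + X]big1 ?addr0 // => b' _.
    set i' := index (rshift k b') s.
    have hrow := hg2 i' (hidx _); rewrite /p /i' nthi pR in hrow.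
    have hrow' : \sum_(j < k + k) g i' j = 0 := hrow.
    have h0 : forall j : 'I_(k + k), true -> 0 <= g i' j.
      by move=> j _; apply: hg1 => //; apply: hidx.
    exact: (@psumr_eq0P _ _ xpredT (fun j : 'I_(k + k) => g i' j) h0 hrow' (Ordinal (hidx (rshift k b))) isT).
have hcost : coupling_cost x x' gg <=
    \sum_(l < k + k) (z l.+1 - z l) * `|cum p l.+1 - cum q l.+1|.
  rewrite -hg4.
  pose H := fun c d : 'I_(k + k) => g (index c s) (index d s) * `|u c - u d|.
  have H0 : forall c d, 0 <= H c d by move=> c d; rewrite mulr_ge0 // hg1.
  have -> : \sum_(i < k + k) \sum_(j < k + k) g i j * `|z i - z j| = \sum_c \sum_d H c d.
    rewrite -(@bridge2 _ s c0 (fun l => \sum_(j < k + k) g l j * `|z l - z j|) _ hs hsz).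
    apply: eq_bigr => c _.
    rewrite -(@bridge2 _ s c0 (fun l' => g (index c s) l' * `|z (index c s) - z l'|) _ hs hsz).
    by apply: eq_bigr => d _; rewrite /H /z !nthi.
  rewrite /coupling_cost big_split_ord /=.
  apply: (le_trans (y := \sum_a \sum_d H (lshift k a) d)); last first.
    by rewrite lerDl sumr_ge0 // => b _; rewrite sumr_ge0.
  apply: ler_sum => a _; rewrite big_split_ord /=.
  apply: (le_trans (y := \sum_b H (lshift k a) (rshift k b))); last first.
    by rewrite lerDr sumr_ge0.
  by apply: ler_sum => b _; rewrite /H /gg uL uR.
have d0 : 0 <= delta by apply: le_trans (hmom 1%nat _) => //; apply/andP; split => //; lia.
set t := powR delta (2 * k - 1)%nat%:R^-1.
have t0 : 0 <= t by apply: powR_ge0.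
have ht : t ^+ (k + k).-1 = delta.
  have -> : (k + k).-1 = (2 * k - 1)%nat by lia.
  rewrite /t -powR_mulrn ?powR_ge0 // -powRrM mulVf ?powRr1 //.
  by rewrite pnatr_eq0; lia.
have cb : forall f : nat -> R, (forall i : nat, (i < k + k)%nat -> 0 <= f i) ->
    cum f (k + k) = 1 -> forall i : nat, (i <= k + k)%nat -> 0 <= cum f i <= 1.
  move=> f hf hf1 i hi; have hm := @cum_mono (k + k) f hf.
  by rewrite -(cum0 f) -hf1 !hm.
have hterm : forall l : 'I_(k + k),
    (z l.+1 - z l) * `|cum p l.+1 - cum q l.+1| <= 36 * t.
  move=> l; have hl := ltn_ord l.
  have cp := cb p hp hP1 l.+1 hl; have cq := cb q hq hQ1 l.+1 hl.
  have hR : 0 <= `|cum p l.+1 - cum q l.+1| <= 1 by apply: absdiff01.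
  have h36 : 0 <= 36 * t by rewrite mulr_ge0.
  case: (ltnP l.+1 (k + k)) => hl1; last first.
    have e : l.+1 = (k + k)%nat by apply/eqP; rewrite eqn_leq hl hl1.
    by rewrite e hP1 hQ1 subrr normr0 mulr0.
  have Gge : 0 <= z l.+1 - z l by rewrite subr_ge0; apply: hz.
  have [hG0|hG0] := eqVneq (z l.+1 - z l) 0; first by rewrite hG0 mul0r.
  have Gp : 0 < z l.+1 - z l by rewrite lt_def hG0 Gge.
  set G := z l.+1 - z l in Gge hG0 Gp *.
  have G2 : G <= 2 by apply: gap2.
  apply: (@gap_arith (k + k) G _ delta t (leq_add hk hk) Gge hR t0 ht).
  have hsep : forall i : 'I_(k + k), z i <= z l \/ z l + G <= z i.
    move=> i; case: (leqP i l) => h; first by left; apply: hz.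
    by right; rewrite /G addrC subrK; apply: hz.
  have hmomz' : forall j : nat, (j < #|'I_(k + k)|)%nat ->
      `|\sum_i (fun i : 'I_(k + k) => p i - q i) i * (fun i : 'I_(k + k) => z i) i ^+ j| <= delta.
    by move=> j; rewrite card_ord => hj; apply: hmomz.
  have := @gap_bound 'I_(k + k) (fun i => z i) (fun i => p i - q i) delta (z l) G Gp G2 d0
    (fun i => hzr i) hsep hmomz'.
  rewrite card_ord.
  have -> : \sum_(i : 'I_(k + k) | z l < z i) (p i - q i) = \sum_(i < k + k) (l < i)%:R * (p i - q i).
    rewrite big_mkcond; apply: eq_bigr => i _.
    case: (leqP i l) => h.
      have : z i <= z l by apply: hz.
      by rewrite leNgt => /negbTE ->; rewrite mul0r.
    have : z l < z i.
      by apply: (lt_le_trans (y := z l.+1)); [rewrite -subr_gt0 | apply: hz].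
    by move=> ->; rewrite mul1r.
  rewrite (@sum_ind_gt (k + k) l (fun i => p i - q i) hl).
  have e : \sum_(l.+1 <= i < k + k) (p i - q i) = - (cum p l.+1 - cum q l.+1).
    rewrite sumrB.
    have hsplit : forall f : nat -> R, \sum_(l.+1 <= i < k + k) f i = cum f (k + k) - cum f l.+1.
      move=> f; rewrite /cum -!(big_mkord xpredT f) (@big_cat_nat _ _ _ l.+1 0 (k + k) _ _ (leq0n _) (ltnW hl1)) /=.
      by rewrite addrC addrK.
    by rewrite !hsplit hP1 hQ1; ring.
  by rewrite e normrN.
have hsum : \sum_(l < k + k) (z l.+1 - z l) * `|cum p l.+1 - cum q l.+1| <= (k + k)%:R * (36 * t).
  apply: (le_trans (y := \sum_(l < k + k) 36 * t)); first by apply: ler_sum => l _; apply: hterm.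
  by rewrite sumr_const card_ord [X in _ <= X]mulrC mulr_natr.
have hW : W1 w x w' x' <= coupling_cost x x' gg.
  rewrite /W1; apply: ge_inf.
  - exists 0 => y [g' [[hg'0 _] ->]].
    by rewrite /coupling_cost sumr_ge0 // => i _; rewrite sumr_ge0 // => j _; rewrite mulr_ge0.
  - by exists gg; split.
apply: (le_trans hW); apply: (le_trans hcost); apply: (le_trans hsum).
have e : (k + k)%:R * (36 * t) = 72 * k%:R * t by rewrite natrD; ring.
by rewrite e lexx.
Qed.
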